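(* Let $0<q<1/2$, $p=1-q$ and $z\ge1$ an integer. Define $$P(z)=1-\sum_{k=0}^{z-1}\left(p^zq^k-q^zp^k\right)\binom{k+z-1}{k},\qquad P_{SN}(z)=1-\sum_{k=0}^{z-1}e^{-zq/p}\frac{(zq/p)^k}{k!}\left(1-\left(\frac qp\right)^{z-k}\right),$$ and for $\kappa>0$ $$P(z,\kappa)=1-\sum_{k=0}^{z-1}\left(1-\left(\frac qp\right)^{z-k}\right)\frac{\mu^k}{k!}e^{-\mu},\qquad \mu=\kappa z\frac qp.$$ Then $P_{SN}(z)=P(z,1)$ and $$P(z)=\int_0^{+\infty}P(z,\kappa)\,d\rho_z(\kappa),\qquad d\rho_z(\kappa)=\frac{z^z}{(z-1)!}\kappa^{z-1}e^{-z\kappa}\,d\kappa.$$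
   Context: $P(z)$ is the exact probability of success of a double-spend attack (attacker relative hash power $q$, honest $p$) after $z$ confirmations; $P_{SN}(z)$ is Nakamoto's approximation of it; $P(z,\kappa)$ is the success probability conditional on the $z$ honest blocks having taken $\kappa$ times their expected total time. *)

(* Defs.v *)
From Stdlib Require Import Reals.
From Coquelicot Require Import Coquelicot.
Open Scope R_scope.

(* Sums over k = 0 .. z-1 are written  sum_f_R0 f (z-1)  (z >= 1),
   since sum_f_R0 f n = f 0 + ... + f n. *)

Definition P_exact (q : R) (z : nat) : R :=
  let p := 1 - q in
  1 - sum_f_R0 (fun k => (p ^ z * q ^ k - q ^ z * p ^ k) * Binomial.C (k + z - 1) k)
        (z - 1).

Definition P_SN (q : R) (z : nat) : R :=
  let p := 1 - q in
  let lam := INR z * q / p in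
  1 - sum_f_R0 (fun k => exp (- lam) * lam ^ k / INR (Factorial.fact k) * (1 - (q / p) ^ (z - k)))
        (z - 1).

Definition P_kappa (q : R) (z : nat) (kappa : R) : R :=
  let p := 1 - q in
  let mu := kappa * INR z * (q / p) in
  1 - sum_f_R0 (fun k => (1 - (q / p) ^ (z - k)) * (mu ^ k / INR (Factorial.fact k)) * exp (- mu))
        (z - 1).

Definition rho_density (z : nat) (kappa : R) : R :=
  INR z ^ z / INR (Factorial.fact (z - 1)) * kappa ^ (z - 1) * exp (- INR z * kappa).

(* Main.v *)
Require Import Defs.
From Stdlib Require Import Reals Lra Lia.
From Coquelicot Require Import Coquelicot.
Open Scope R_scope.

Fixpoint Fg (n : nat) (a x : R) : R :=
  match n with
  | O => - exp (- a * x) / a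
  | S m => - (x ^ S m * exp (- a * x)) / a + INR (S m) / a * Fg m a x
  end.

Lemma Fg_derive (a : R) (n : nat) (x : R) : 0 < a ->
  is_derive (Fg n a) x (x ^ n * exp (- a * x)).
Proof.
  intros Ha. induction n as [|m IH].
  - simpl. auto_derive; auto. field. lra.
  - evar (d1 : R).
    assert (H1 : is_derive (fun x => - (x ^ S m * exp (- a * x)) / a) x d1).
    { auto_derive; auto. unfold d1. reflexivity. }
    unfold d1 in H1.
    assert (H2 := is_derive_scal (Fg m a) x (INR (S m) / a) _ IH).
    assert (H := is_derive_plus _ _ x _ _ H1 H2).
    match type of H with is_derive _ _ ?v => replace (x ^ S m * exp (- a * x)) with v end.
    exact H.
    unfold plus, scal; simpl; unfold mult; simpl. field. lra.
Qed.

Lemma exp_ge_pow (y : R) (n : nat) : 0 <= y -> y ^ n / INR (Factorial.fact n) <= exp y.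
Proof.
  intros Hy. destruct n as [|n].
  - simpl. assert (H := exp_ineq1_le y). lra.
  - assert (H := exp_ge_taylor y (S n) Hy). rewrite tech5 in H.
    assert (0 <= sum_f_R0 (fun k => y ^ k / INR (Factorial.fact k)) n).
    { apply cond_pos_sum. intros k. apply Rmult_le_pos. apply pow_le; auto.
      left; apply Rinv_0_lt_compat, lt_0_INR, Factorial.lt_O_fact. }
    lra.
Qed.

Lemma lim_pow_exp (a : R) (n : nat) : 0 < a ->
  is_lim (fun x => x ^ n * exp (- a * x)) p_infty 0.
Proof.
  intros Ha.
  apply (is_lim_le_le_loc (fun _ => 0) (fun x => (INR (Factorial.fact (S n)) / a ^ S n) * / x)).
  - exists 0. intros x Hx. split.
    + apply Rmult_le_pos. apply pow_le; lra. left; apply exp_pos.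
    + assert (Hf : 0 < INR (Factorial.fact (S n))) by apply lt_0_INR, Factorial.lt_O_fact.
      assert (He := exp_ge_pow (a * x) (S n) ltac:(nra)).
      assert (Han : 0 < a ^ S n) by (apply pow_lt; lra).
      assert (Hxn : 0 < x ^ n) by (apply pow_lt; lra).
      replace (- a * x) with (- (a * x)) by ring. rewrite exp_Ropp.
      assert (Hep : 0 < exp (a * x)) by apply exp_pos.
      rewrite Rpow_mult_distr in He. simpl pow in He |- *.
      apply Rle_div_l in He; auto.
      apply (Rmult_le_reg_r (exp (a * x) * (a * a ^ n) * x)).
      { assert (0 < a ^ n) by (apply pow_lt; lra). apply Rmult_lt_0_compat; [apply Rmult_lt_0_compat|]; nra. }
      assert (0 < a ^ n) by (apply pow_lt; lra). field_simplify; [|repeat split; lra|lra]. lra.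
  - apply is_lim_const.
  - replace (Finite 0) with (Rbar_mult (INR (Factorial.fact (S n)) / a ^ S n) (Rbar_inv p_infty)).
    apply is_lim_scal_l. apply is_lim_inv. apply is_lim_id. discriminate.
    simpl. f_equal. ring.
Qed.

Lemma Fg_0 (a : R) (n : nat) : 0 < a -> Fg n a 0 = - INR (Factorial.fact n) / a ^ S n.
Proof.
  intros Ha. induction n as [|m IH].
  - simpl. rewrite Rmult_0_r, exp_0. field. lra.
  - change (Fg (S m) a 0) with (- (0 ^ S m * exp (- a * 0)) / a + INR (S m) / a * Fg m a 0). rewrite IH. change (Factorial.fact (S m)) with (S m * Factorial.fact m)%nat.
    rewrite mult_INR. simpl pow. field. split; [apply pow_nonzero|]; lra.
Qed.

Lemma Fg_lim (a : R) (n : nat) : 0 < a -> is_lim (Fg n a) p_infty 0.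
Proof.
  intros Ha. induction n as [|m IH].
  - apply (is_lim_ext (fun x => (-1/a) * (x ^ 0 * exp (- a * x)))).
    { intros y. simpl. field. lra. }
    replace (Finite 0) with (Rbar_mult (-1/a) 0) by (simpl; f_equal; ring).
    apply is_lim_scal_l, lim_pow_exp; auto.
  - apply (is_lim_ext (fun x => (-1/a) * (x ^ S m * exp (- a * x)) + INR (S m) / a * Fg m a x)).
    { intros y. change (Fg (S m) a y) with (- (y ^ S m * exp (- a * y)) / a + INR (S m) / a * Fg m a y). field. lra. }
    replace (Finite 0) with (Finite (0 + 0)) by (f_equal; ring).
    apply is_lim_plus'.
    + replace (0:R) with (-1/a * 0) by ring.
      apply (is_lim_scal_l _ (-1/a) p_infty 0), lim_pow_exp; auto.
    + replace (0:R) with (INR (S m) / a * 0) by ring.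
      apply (is_lim_scal_l _ _ p_infty 0), IH.
Qed.

Lemma gamma_int (a : R) (n : nat) : 0 < a ->
  is_RInt_gen (fun x => x ^ n * exp (- a * x)) (at_point 0) (Rbar_locally p_infty)
    (INR (Factorial.fact n) / a ^ S n).
Proof.
  intros Ha.
  apply (is_RInt_gen_ext (Derive (Fg n a))).
  { apply filter_forall. intros ab x _. apply is_derive_unique, Fg_derive; auto. }
  replace (INR (Factorial.fact n) / a ^ S n) with (0 - Fg n a 0)
    by (rewrite Fg_0; auto; field; apply pow_nonzero; lra).
  apply is_RInt_gen_Derive.
  - apply filter_forall. intros ab x _. eexists. apply Fg_derive; auto.
  - apply filter_forall. intros ab x _.
    apply (continuous_ext (fun x => x ^ n * exp (- a * x))).
    { intros y. symmetry. apply is_derive_unique, Fg_derive; auto. }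
    apply (ex_derive_continuous (K:=R_AbsRing) (V:=R_NormedModule)). auto_derive. auto.
  - intros P HP. exact (locally_singleton _ _ HP).
  - apply Fg_lim; auto.
Qed.

Lemma RInt_gen_sum (f : nat -> R -> R) (l : nat -> R) (N : nat) :
  (forall k, (k <= N)%nat -> is_RInt_gen (f k) (at_point 0) (Rbar_locally p_infty) (l k)) ->
  is_RInt_gen (fun x => sum_f_R0 (fun k => f k x) N) (at_point 0) (Rbar_locally p_infty)
    (sum_f_R0 l N).
Proof.
  induction N as [|N IH]; intros H.
  - simpl. apply H. lia.
  - simpl. apply (is_RInt_gen_plus (fun x => sum_f_R0 (fun k => f k x) N) (f (S N))).
    + apply IH. intros k Hk. apply H. lia.
    + apply H. lia.
Qed.

Theorem mainTheorem6 (q : R) (z : nat) :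
  0 < q < 1 / 2 -> (1 <= z)%nat ->
  P_SN q z = P_kappa q z 1 /\
  is_RInt_gen (fun kappa => P_kappa q z kappa * rho_density z kappa)
    (at_point 0) (Rbar_locally p_infty) (P_exact q z).
Proof.
  intros Hq Hz. split.
  { unfold P_SN, P_kappa; cbv zeta. f_equal. apply sum_eq. intros k _.
    replace (1 * INR z * (q / (1 - q))) with (INR z * q / (1 - q)) by (unfold Rdiv; ring).
    unfold Rdiv; ring. }
  destruct z as [|n]; [lia|].
  set (p := 1 - q). assert (Hp : 0 < p) by (unfold p; lra).
  set (Z := INR (S n)). assert (HZ : 0 < Z) by (apply lt_0_INR; lia).
  set (r := q / p).
  set (a := Z / p). assert (Ha : 0 < a) by (unfold a; apply Rdiv_lt_0_compat; lra).
  set (C := Z ^ S n / INR (Factorial.fact n)).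
  set (c := fun k => (1 - r ^ (S n - k)) * (Z * r) ^ k / INR (Factorial.fact k) * C).
  assert (Hext : forall x, C * (x ^ n * exp (- Z * x))
      - sum_f_R0 (fun k => c k * (x ^ (k + n) * exp (- a * x))) n
      = P_kappa q (S n) x * rho_density (S n) x).
  { intros x. unfold P_kappa, rho_density. fold p Z r.
    replace (S n - 1)%nat with n by lia. fold C.
    rewrite Rmult_minus_distr_r, Rmult_1_l, (Rmult_comm (sum_f_R0 _ _)), scal_sum.
    f_equal. { unfold C. ring. }
    apply sum_eq. intros k Hk. unfold c.
    replace (exp (- a * x)) with (exp (- (x * Z * r)) * exp (- Z * x)).
    2: { rewrite <- exp_plus. f_equal. unfold a, r, p. field. lra. }
    replace (x * Z * r) with (x * (Z * r)) by ring.
    rewrite (Rpow_mult_distr x (Z * r) k), pow_add. unfold C, Rdiv. ring. }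
  apply (is_RInt_gen_ext (fun x => C * (x ^ n * exp (- Z * x))
      - sum_f_R0 (fun k => c k * (x ^ (k + n) * exp (- a * x))) n)).
  { apply filter_forall. intros ab x _. apply Hext. }
  replace (P_exact q (S n)) with (C * (INR (Factorial.fact n) / Z ^ S n)
      - sum_f_R0 (fun k => c k * (INR (Factorial.fact (k + n)) / a ^ S (k + n))) n).
  - apply (is_RInt_gen_minus (fun x => C * (x ^ n * exp (- Z * x)))
             (fun x => sum_f_R0 (fun k => c k * (x ^ (k + n) * exp (- a * x))) n)).
    + apply (is_RInt_gen_scal (fun x => x ^ n * exp (- Z * x))). apply gamma_int; auto.
    + apply (RInt_gen_sum (fun k x => c k * (x ^ (k + n) * exp (- a * x)))).
      intros k _. apply (is_RInt_gen_scal (fun x => x ^ (k + n) * exp (- a * x))).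
      apply gamma_int; auto.
  - unfold P_exact. fold p. replace (S n - 1)%nat with n by lia.
    f_equal.
    { unfold C. field. split. apply pow_nonzero; lra.
      apply not_0_INR, Nat.neq_sym, Nat.lt_neq, Factorial.lt_O_fact. }
    apply sum_eq. intros k Hk.
    destruct (Nat.le_exists_sub k n Hk) as [j [Hj _]]. subst n.
    replace (k + S (j + k) - 1)%nat with (k + (j + k))%nat by lia.
    unfold c, C, Binomial.C. cbv beta.
    replace (S (j + k) - k)%nat with (S j) by lia.
    replace (k + (j + k) - k)%nat with (j + k)%nat by lia.
    assert (Hfk : INR (Factorial.fact k) <> 0) by
      (apply not_0_INR, Nat.neq_sym, Nat.lt_neq, Factorial.lt_O_fact).
    assert (Hfn : INR (Factorial.fact (j + k)) <> 0) by
      (apply not_0_INR, Nat.neq_sym, Nat.lt_neq, Factorial.lt_O_fact).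
    unfold a, r. unfold Rdiv. rewrite !Rpow_mult_distr, !pow_inv.
    simpl pow. rewrite !pow_add.
    assert (p ^ j <> 0) by (apply pow_nonzero; lra).
    assert (p ^ k <> 0) by (apply pow_nonzero; lra).
    assert (Z ^ j <> 0) by (apply pow_nonzero; lra).
    assert (Z ^ k <> 0) by (apply pow_nonzero; lra).
    field. repeat split; lra.
Qed.
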